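(* Consider the average-cost MDP described in the context, and let $\pi^\star(s)=\arg\min_{a\in\mathcal{A}(s)}Q(s,a)$ be the age-optimal policy. Fix $j\in\mathcal{I}$ and two states $s^1=\{(b_i^1,A_i^1,g_i^1,h_i^1)\}_{i\in\mathcal{I}}$ and $s^2=\{(b_i^2,A_i^2,g_i^2,h_i^2)\}_{i\in\mathcal{I}}$ such that (i) $A_j^2\ge A_j^1$, (ii) $A_i^2=A_i^1$ for all $i\neq j$, and (iii) $b_i^1=b_i^2$, $g_i^1=g_i^2$, $h_i^1=h_i^2$ for all $i\in\mathcal{I}$. If $\pi^\star(s^1)=T_j$, then $\pi^\star(s^2)=T_j$.
   Context: There are $N$ source nodes indexed by $\mathcal{I}=\{1,\dots,N\}$ and one destination. Time is slotted. The state of source $i$ is $s_i=(b_i,A_i,g_i,h_i)$, where $b_i\in\{0,1,\dots,b_{\max,i}\}$ is the discrete battery level (in energy quanta of $B_{\max,i}/b_{\max,i}$ joules), $A_i\in\{1,\dots,A_{\max,i}\}$ is the AoI of process $i$ at the destination, and $g_i,h_i$ are downlink/uplink channel power gains taking finitely many ordered values; the system state is $s=\{s_i\}_{i\in\mathcal{I}}$. Channel gains are i.i.d. over slots and independent of everything else, with pmfs $\mathbb{P}(g_i),\mathbb{P}(h_i)$. Actions $\mathcal{A}=\{H,T_1,\dots,T_N\}$ ($H$: energy transfer by destination; $T_i$: source $i$ transmits an update). Let $e_i^{\rm H}=\lfloor \frac{b_{\max,i}}{B_{\max,i}}\eta P g_i\rfloor$ and $e_i^{\rm T}=\lceil \frac{b_{\max,i}}{B_{\max,i}}\frac{\sigma^2}{h_i}(2^{\bar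 S}-1)\rceil$ with positive constants $\eta,P,\sigma^2,\bar S$; $T_i$ is feasible only if $b_i\ge e_i^{\rm T}$, and $\mathcal{A}(s)$ is the feasible action set. Transitions: $b_i'=b_i-e_i^{\rm T}$ if $a=T_i$, $b_i'=\min\{b_{\max,i},b_i+e_i^{\rm H}\}$ if $a=H$, else $b_i'=b_i$; $A_i'=1$ if $a=T_i$, else $A_i'=\min\{A_{\max,i},A_i+1\}$; $g_i',h_i'$ fresh draws; so $\mathbb{P}(s'\mid s,a)=\prod_i\mathbb{1}(b_i')\mathbb{1}(A_i')\mathbb{P}(g_i')\mathbb{P}(h_i')$. Cost per slot $\sum_i\theta_iA_i$, $\theta_i\ge0$, $\sum_i\theta_i=1$. $V$ and $\bar A^\star$ satisfy the Bellman equation $\bar A^\star+V(s)=\min_{a\in\mathcal{A}(s)}Q(s,a)$ with $Q(s,a)=\sum_i\theta_iA_i+\sum_{s'}\mathbb{P}(s'\mid s,a)V(s')$. *)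

(* Defs.v *)
From HB Require Import structures.
From mathcomp Require Import all_boot all_order all_algebra.
From mathcomp Require Import all_classical all_reals all_analysis.
Set Implicit Arguments. Unset Strict Implicit. Unset Printing Implicit Defensive.
Import Order.TTheory GRing.Theory Num.Theory.
Local Open Scope ring_scope.

Record model (R : realType) := Model {
  N : nat;                                   (* number of sources, I = 'I_N *)
  bmax : 'I_N -> nat;                        (* b_{max,i}: battery levels 0..bmax *)
  Bmax : 'I_N -> R;                          (* B_{max,i} in joules *)
  Amax : 'I_N -> nat;                        (* A_{max,i}: ages 1..Amax *)
  ng : 'I_N -> nat;                          (* number of downlink gain values *)
  nh : 'I_N -> nat;                          (* number of uplink gain values *)
  gv : forall i, 'I_(ng i) -> R;
  hv : forall i, 'I_(nh i) -> R;
  pg : forall i, 'I_(ng i) -> R;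
  ph : forall i, 'I_(nh i) -> R;
  eta : R; Ptx : R; sigma2 : R; Sbar : R;
  theta : 'I_N -> R
}.

Arguments N {R} m.
Arguments bmax {R} m i.  Arguments Bmax {R} m i.  Arguments Amax {R} m i.
Arguments ng {R} m i.  Arguments nh {R} m i.
Arguments gv {R} m {i} x.  Arguments hv {R} m {i} x.
Arguments pg {R} m {i} x.  Arguments ph {R} m {i} x.
Arguments eta {R} m.  Arguments Ptx {R} m.  Arguments sigma2 {R} m.
Arguments Sbar {R} m.  Arguments theta {R} m i.

Definition wf_model (R : realType) (M : model R) : Prop :=
  [/\ (forall i, 0 < Bmax M i),
      (forall i (x y : 'I_(ng M i)), (x < y)%N -> gv M x < gv M y),
      (forall i (x y : 'I_(nh M i)), (x < y)%N -> hv M x < hv M y),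
      (forall i (x : 'I_(ng M i)), 0 <= gv M x) & (forall i (x : 'I_(nh M i)), 0 < hv M x)] /\
  [/\ (forall i (x : 'I_(ng M i)), 0 <= pg M x), (forall i, \sum_(x : 'I_(ng M i)) pg M x = 1),
      (forall i (x : 'I_(nh M i)), 0 <= ph M x), (forall i, \sum_(x : 'I_(nh M i)) ph M x = 1)
    & [/\ 0 < eta M, 0 < Ptx M, 0 < sigma2 M & 0 < Sbar M]] /\
  ((forall i, 0 <= theta M i) /\ \sum_i theta M i = 1).

Definition lstate (R : realType) (M : model R) (i : 'I_(N M)) : finType :=
  ('I_(bmax M i).+1 * 'I_(Amax M i) * 'I_(ng M i) * 'I_(nh M i))%type.

Arguments lstate {R} M i.

Definition state (R : realType) (M : model R) : finType :=
  {dffun forall i : 'I_(N M), lstate M i}.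

Section MDP.
Variables (R : realType) (M : model R).

Definition bat (s : state M) i : nat := (s i).1.1.1.
Definition age (s : state M) i : nat := ((s i).1.1.2).+1.
Definition glev (s : state M) i : 'I_(ng M i) := (s i).1.2.
Definition hlev (s : state M) i : 'I_(nh M i) := (s i).2.
Definition gain_g (s : state M) i : R := gv M (glev s i).
Definition gain_h (s : state M) i : R := hv M (hlev s i).

(* Actions: H (energy transfer) or T_i (source i transmits). *)
Inductive action := H | T of 'I_(N M).

Definition eH (s : state M) i : nat :=
  Num.truncn ((bmax M i)%:R / Bmax M i * eta M * Ptx M * gain_g s i).
Definition eT (s : state M) i : nat :=
  absz (Num.ceil ((bmax M i)%:R / Bmax M i * (sigma2 M / gain_h s i)
                  * (2 `^ Sbar M - 1))).

Definition feasible (s : state M) (a : action) : bool :=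
  match a with H => true | T i => (eT s i <= bat s i)%N end.

Definition is_T (a : action) i : bool :=
  match a with T k => k == i | H => false end.

Definition next_b (s : state M) (a : action) i : nat :=
  match a with
  | H => minn (bmax M i) (bat s i + eH s i)
  | T k => if k == i then (bat s i - eT s i)%N else bat s i
  end.

Definition next_A (s : state M) (a : action) i : nat :=
  if is_T a i then 1%N else minn (Amax M i) (age s i).+1.

Definition trans (s : state M) (a : action) (s' : state M) : R :=
  \prod_(i < N M)
    ((bat s' i == next_b s a i)%:R * (age s' i == next_A s a i)%:R
     * pg M (glev s' i) * ph M (hlev s' i)).

Definition cost (s : state M) : R := \sum_(i < N M) theta M i * (age s i)%:R.

Definition Qf (V : state M -> R) (s : state M) (a : action) : R :=
  cost s + \sum_(s' : state M) trans s a s' * V s'.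

Definition bellman (Abar : R) (V : state M -> R) : Prop :=
  forall s : state M,
    (exists2 a, feasible s a & Abar + V s = Qf V s a) /\
    (forall a, feasible s a -> Abar + V s <= Qf V s a).

Definition optimal_at (V : state M -> R) (s : state M) (a : action) : Prop :=
  feasible s a /\ forall a', feasible s a' -> Qf V s a <= Qf V s a'.

End MDP.

(* Main.v *)
Require Import Defs.
From mathcomp Require Import all_boot all_order all_algebra.
From mathcomp Require Import all_classical all_reals all_analysis.
Import Order.TTheory GRing.Theory Num.Theory.
From mathcomp Require Import lra zify.
Set Implicit Arguments. Unset Strict Implicit. Unset Printing Implicit Defensive.
Local Open Scope ring_scope.

Definition swo n (p q : nat) (x : 'I_n) : 'I_n :=
  if val x == p then insubd x q else if val x == q then insubd x p else x.

Lemma val_swo n p q (x : 'I_n) : (p < n)%N -> (q < n)%N ->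
  val (swo p q x) = if val x == p then q else if val x == q then p else val x.
Proof.
move=> hp hq; rewrite /swo; case: ifP => _; first by rewrite val_insubd hq.
by case: ifP => _ //; rewrite val_insubd hp.
Qed.

Lemma swoK n p q (x : 'I_n) : (p < n)%N -> (q < n)%N -> swo p q (swo p q x) = x.
Proof.
move=> hp hq; apply: val_inj; rewrite !val_swo //.
case: (eqVneq (val x) p) => [->|hxp].
  by case: (eqVneq q p) => [->|hqp]; rewrite ?eqxx // (negbTE hqp) eqxx.
case: (eqVneq (val x) q) => [->|hxq].
  by rewrite eqxx.
by rewrite (negbTE hxp) (negbTE hxq).
Qed.

Section Mono.
Variables (R : realType) (M : model R).
Variable (j : 'I_(N M)).

Definition phi (p q : nat) (s : state M) : state M :=
  [ffun i => ((s i).1.1.1, if i == j then swo p q (s i).1.1.2 else (s i).1.1.2,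
              (s i).1.2, (s i).2)].


Definition rel (s t : state M) :=
  [/\ (age s j <= age t j)%N, (forall i, i != j -> age t i = age s i)
    & (forall i, [/\ bat s i = bat t i, glev s i = glev t i & hlev s i = hlev t i])].

Lemma rel_eT s t i : rel s t -> eT s i = eT t i.
Proof. by case=> _ _ /(_ i) [_ _ e]; rewrite /eT /gain_h e. Qed.

Lemma rel_eH s t i : rel s t -> eH s i = eH t i.
Proof. by case=> _ _ /(_ i) [_ e _]; rewrite /eH /gain_g e. Qed.

Lemma rel_bat s t i : rel s t -> bat s i = bat t i.
Proof. by case=> _ _ /(_ i) []. Qed.

Lemma rel_feas s t a : rel s t -> feasible s a = feasible t a.
Proof. by move=> hr; case: a => [|k] //=; rewrite (rel_eT k hr) (rel_bat k hr). Qed.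

Lemma rel_nb s t a i : rel s t -> next_b s a i = next_b t a i.
Proof.
by move=> hr; case: a => [|k] /=; rewrite (rel_bat i hr) ?(rel_eH i hr) ?(rel_eT i hr).
Qed.

Lemma rel_nA s t a i : rel s t -> i != j -> next_A s a i = next_A t a i.
Proof. by case=> _ h2 _ hi; rewrite /next_A h2. Qed.

Lemma age_le s i : (age s i <= Amax M i)%N.
Proof. exact: ltn_ord. Qed.

Lemma nA_bnd s a i : (0 < next_A s a i <= Amax M i)%N.
Proof.
have := age_le s i; rewrite /next_A; case: ifP => _ h.
  by apply/andP; split => //; apply: leq_ltn_trans h.
by rewrite geq_minl andbT leq_min (leq_ltn_trans _ h).
Qed.

Lemma bat_phi p q s i : bat (phi p q s) i = bat s i.
Proof. by rewrite /bat ffunE. Qed.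
Lemma glev_phi p q s i : glev (phi p q s) i = glev s i.
Proof. by rewrite /glev ffunE. Qed.
Lemma hlev_phi p q s i : hlev (phi p q s) i = hlev s i.
Proof. by rewrite /hlev ffunE. Qed.
Lemma age_phi_ne p q s i : i != j -> age (phi p q s) i = age s i.
Proof. by move=> /negbTE h; rewrite /age ffunE /= h. Qed.
Lemma age_phi p q s : age (phi p q s) j = (val (swo p q (s j).1.1.2)).+1.
Proof. by rewrite /age ffunE /= eqxx. Qed.

Lemma phiK p q s : (p < Amax M j)%N -> (q < Amax M j)%N -> phi p q (phi p q s) = s.
Proof.
move=> hp hq; apply/ffunP => i; rewrite !ffunE /=.
case: (eqVneq i j) => [eij|nij].
  by subst i; rewrite swoK //; move: (s j) => [[[]]].
by move: (s i) => [[[]]].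
Qed.

Lemma phi_id p s : phi p p s = s.
Proof.
apply/ffunP => i; rewrite !ffunE /=.
have -> : forall n (x : 'I_n), swo p p x = x.
  by move=> n x; rewrite /swo; case: eqP => // e; apply: val_inj; rewrite val_insubd -e ltn_ord.
by case: ifP => _; move: (s i) => [[[]]].
Qed.

Lemma swap_eq (x p q : nat) :
  ((if x == p then q else if x == q then p else x) == q) = (x == p).
Proof.
case: (eqVneq x p) => [_|hxp]; first by rewrite eqxx.
case: (eqVneq x q) => [e|hxq]; last by rewrite (negbTE hxq).
by subst x; rewrite eq_sym (negbTE hxp).
Qed.

Section WithT.
Variables (s t : state M) (a : action M).
Hypothesis hr : rel s t.
Let p := (next_A s a j).-1.
Let q := (next_A t a j).-1.

Lemma p_lt : (p < Amax M j)%N.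
Proof. by have /andP[h1 h2] := nA_bnd s a j; rewrite /p prednK. Qed.
Lemma q_lt : (q < Amax M j)%N.
Proof. by have /andP[h1 h2] := nA_bnd t a j; rewrite /q prednK. Qed.

Lemma trans_phi s' : trans t a (phi p q s') = trans s a s'.
Proof.
rewrite /trans; apply: eq_bigr => i _.
rewrite bat_phi glev_phi hlev_phi (rel_nb a i hr).
case: (eqVneq i j) => [eij|nij]; last by rewrite age_phi_ne // (rel_nA a hr nij).
subst i; rewrite age_phi.
have /andP[hs _] := nA_bnd s a j; have /andP[ht _] := nA_bnd t a j.
rewrite -(prednK hs) -(prednK ht) !eqSS val_swo ?p_lt ?q_lt //.
by rewrite -/p -/q swap_eq.
Qed.

Lemma sum_phi (F : state M -> R) :
  \sum_(s' : state M) trans t a s' * F s' = \sum_(s' : state M) trans s a s' * F (phi p q s').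
Proof.
rewrite (reindex_inj (can_inj (fun x => phiK x p_lt q_lt))) /=.
by apply: eq_bigr => s' _; rewrite trans_phi.
Qed.

End WithT.

Lemma trans_supp s a s' : trans s a s' != 0 -> age s' j = next_A s a j.
Proof.
apply: contraNeq => hne; rewrite /trans (bigD1 j) //= (negbTE hne).
by rewrite mulr0 !mul0r.
Qed.

Lemma rel_eq s t : rel s t -> age s j = age t j -> s = t.
Proof.
case=> _ h2 h3 hj; apply/ffunP => i.
have [hb hg hh] := h3 i.
have ha : age s i = age t i by case: (eqVneq i j) => [->|nij] //; rewrite h2.
move: hb hg hh ha; rewrite /bat /glev /hlev /age.
move: (s i) (t i) => [[[b1 a1] g1] k1] [[[b2 a2] g2] k2] /= eb -> -> [] ea.
by congr (_, _, _, _); apply: val_inj.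
Qed.

Lemma rel_phi (s t : state M) (a : action M) s' : rel s t -> is_T a j = false ->
  age s' j = next_A s a j -> rel s' (phi (next_A s a j).-1 (next_A t a j).-1 s').
Proof.
move=> hr hT hs'.
  case: (hr) => h1 h2 h3.
  have /andP[p0 pA] := nA_bnd s a j; have /andP[q0 qA] := nA_bnd t a j.
  split.
  - rewrite age_phi val_swo; last 2 first.
    + exact: p_lt.
    + exact: q_lt.
    have e : val ((s' j).1.1.2) = (next_A s a j).-1 by rewrite -hs'.
    rewrite e eqxx hs' !prednK // /next_A hT; lia.
  - by move=> i nij; rewrite age_phi_ne.
  - by move=> i; rewrite bat_phi glev_phi hlev_phi.
Qed.

Section WithV.
Hypothesis hM : wf_model M.
Variables (Abar : R) (V : state M -> R).
Hypothesis hB : bellman Abar V.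

Lemma trans_ge0 (s : state M) (a : action M) (s' : state M) : 0 <= trans s a s'.
Proof.
case: hM => _ [[hpg _ hph _ _] _].
by apply: prodr_ge0 => i _; rewrite !mulr_ge0.
Qed.

Lemma sum_le (s t : state M) (a : action M) : rel s t ->
  (forall s', age s' j = next_A s a j ->
     V s' <= V (phi (next_A s a j).-1 (next_A t a j).-1 s')) ->
  \sum_(s' : state M) trans s a s' * V s' <= \sum_(s' : state M) trans t a s' * V s'.
Proof.
move=> hr hV; rewrite (sum_phi a hr); apply: ler_sum => s' _.
case: (eqVneq (trans s a s') 0) => [->|hne]; first by rewrite !mul0r.
by apply: ler_wpM2l; [exact: trans_ge0 | apply: hV; exact: trans_supp].
Qed.

Lemma cost_le (s t : state M) : rel s t -> cost s <= cost t.
Proof.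
case=> h1 h2 _; case: hM => _ [_ [hth _]].
apply: ler_sum => i _; apply: ler_wpM2l => //; rewrite ler_nat.
by case: (eqVneq i j) => [->|nij] //; rewrite h2.
Qed.

Lemma mono k : forall s t, rel s t -> (Amax M j - age s j <= k)%N -> V s <= V t.
Proof.
elim: k => [|k IH] s t hr hk.
  have hs := age_le s j; have ht := age_le t j; case: (hr) => h1 _ _.
  by rewrite (rel_eq hr) //; lia.
case: (ltnP (age s j) (Amax M j)) => hlt; last first.
  have ht := age_le t j; case: (hr) => h1 _ _.
  by rewrite (rel_eq hr) //; lia.
have [[a fa eqa] _] := hB t.
have hs := (hB s).2 a ltac:(by rewrite (rel_feas a hr)).
suff : Qf V s a <= Qf V t a by lra.
rewrite /Qf; apply: lerD; first exact: cost_le.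
apply: sum_le => // s' hs'.
case hT: (is_T a j).
  by rewrite /next_A hT phi_id.
apply: IH; first exact: rel_phi.
rewrite hs' /next_A hT; lia.
Qed.

End WithV.
End Mono.

Theorem theorem1 (R : realType) (M : model R) (hM : wf_model M)
  (Abar : R) (V : state M -> R) (hB : bellman Abar V)
  (j : 'I_(N M)) (s1 s2 : state M)
  (h1 : (age s1 j <= age s2 j)%N)
  (h2 : forall i, i != j -> age s2 i = age s1 i)
  (h3 : forall i, [/\ bat s1 i = bat s2 i, glev s1 i = glev s2 i
                    & hlev s1 i = hlev s2 i]) :
  optimal_at V s1 (T j) -> optimal_at V s2 (T j).
Proof.
move=> [f1 opt1].
have hr : rel j s1 s2 by [].
split; first by rewrite -(rel_feas (T j) hr).
move=> a' fa'.
have := opt1 a' ltac:(by rewrite (rel_feas a' hr)).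
case hT: (is_T a' j).
  by move: hT; case: a' {fa'} => // k /eqP -> _; rewrite lexx.
have e : \sum_(s' : state M) trans s2 (T j) s' * V s' =
         \sum_(s' : state M) trans s1 (T j) s' * V s'.
  by rewrite (sum_phi (T j) hr); apply: eq_bigr => s' _; rewrite /next_A /= eqxx phi_id.
have hle : \sum_(s' : state M) trans s1 a' s' * V s' <= \sum_(s' : state M) trans s2 a' s' * V s'.
  apply: (sum_le (j := j)) => // s' hs'.
  apply: (mono hM hB (k := Amax M j)); last exact: leq_subr.
  exact: rel_phi.
rewrite /Qf e; lra.
Qed.
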